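(* Let $a,b\in(0,+\infty)$ satisfy $1<a-b$ and $a+b<2$. Let $\varepsilon$ satisfy $$0<\varepsilon<\min\left\{1;\ \frac{a-1-b}{224\,b}\right\}\quad\text{and}\quad \varepsilon<\frac{2-a-b}{224\,b}.$$ Define $\varphi:\mathbb{R}\to\mathbb{R}$ by $$\varphi(t)=\begin{cases}\frac{3}{2}\pi & \text{if } t\in(-\infty,1],\\ \frac{3}{2}\pi+\varepsilon\ln\ln\big(e+(t-1)^4\big) & \text{if } t\in(1,+\infty),\end{cases}$$ and define $g$ on $[0,+\infty)$ by $g(t)=t^{a+b\sin(\varphi(t))}$. Then $$g''(t)-\frac{g'(t)}{t}\le\{224b\varepsilon+a-2+b\}\frac{g'(t)}{t}<0\qquad\forall t>0,$$ so in particular $\frac{g''(t)\,t}{g'(t)}\le 1$ for all $t>0$; moreover the function $t\mapsto\frac{g'(t)}{t}$ is strictly decreasing on $(0,+\infty)$.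
   Context: Here $e$ is Euler's number and $\ln$ the natural logarithm. The function $g$ belongs to $C^1([0,+\infty))\cap C^2((0,+\infty))$ and satisfies $g'(t)>0$ for $t>0$, so the quantities above are well defined. *)

(* Defs.v *)
From Stdlib Require Import Reals.
From Coquelicot Require Import Coquelicot.
Open Scope R_scope.

Definition phi (eps t : R) : R :=
  if Rle_dec t 1 then 3 / 2 * PI
  else 3 / 2 * PI + eps * ln (ln (exp 1 + (t - 1) ^ 4)).

(* g(t) = t^(a + b sin(phi t)) on [0,+oo); g(0) = 0 (exponent is positive).
   Values for t < 0 are irrelevant (only used on t > 0, where derivatives are local). *)
Definition g (a b eps t : R) : R :=
  if Rlt_dec 0 t then Rpower t (a + b * sin (phi eps t)) else 0.

(* Main.v *)
Require Import Defs.
From Stdlib Require Import Reals.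
From Coquelicot Require Import Coquelicot.
From Stdlib Require Import Reals Lra Lia Psatz.
From Coquelicot Require Import Coquelicot.
Open Scope R_scope.

Lemma pow0n (n:nat) : (1 <= n)%nat -> 0 ^ n = 0.
Proof. intros; destruct n; [lia|]; simpl; ring. Qed.

Lemma mpow_deriv (n : nat) (t : R) : (1 <= n)%nat ->
  is_derive (fun x => (Rmax (x-1) 0)^(S n)) t (INR (S n) * (Rmax (t-1) 0)^n).
Proof.
intros Hn.
destruct (Rtotal_order t 1) as [Ht|[Ht|Ht]].
- apply is_derive_ext_loc with (fun _ => 0).
  + apply locally_interval with m_infty (Finite 1); simpl; auto.
    intros y _ Hy. rewrite Rmax_right by lra. simpl; ring.
  + rewrite Rmax_right by lra. rewrite pow0n by lia.
    auto_derive; auto; ring.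
- subst t. apply is_derive_Reals. intros eps Heps.
  exists (mkposreal (Rmin 1 eps) (Rmin_pos _ _ Rlt_0_1 Heps)).
  intros h Hh Hlt. simpl in Hlt.
  replace (1 + h - 1) with h by ring. replace (1-1) with 0 by ring.
  rewrite (Rmax_right 0 0) by lra. rewrite (pow0n n) by lia. rewrite (pow0n (S n)) by lia.
  assert (Hm1 : Rmin 1 eps <= 1) by apply Rmin_l.
  assert (Hm2 : Rmin 1 eps <= eps) by apply Rmin_r.
  destruct (Rle_dec h 0) as [H0|H0].
  + rewrite Rmax_right by lra. rewrite (pow0n (S n)) by lia.
    replace ((0 - 0) / h - INR (S n) * 0) with 0 by (field; auto). rewrite Rabs_R0. lra.
  + rewrite Rmax_left by lra.
    replace ((h ^ S n - 0) / h - INR (S n) * 0) with (h ^ n) by (simpl; field; auto).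
    rewrite Rabs_pos_eq by (apply pow_le; lra).
    rewrite Rabs_pos_eq in Hlt by lra.
    destruct n as [|n]; [lia|].
    assert (h ^ n <= 1). { rewrite <- (pow1 n). apply pow_incr. lra. }
    simpl. assert (h * h^n <= h * 1) by (apply Rmult_le_compat_l; lra). lra.
- apply is_derive_ext_loc with (fun x => (x-1)^(S n)).
  + apply locally_interval with (Finite 1) p_infty; simpl; auto.
    intros y Hy _. rewrite Rmax_left by lra. reflexivity.
  + rewrite Rmax_left by lra.
    auto_derive; auto. destruct n; [lia|]. simpl. unfold Rminus. ring.
Qed.

Definition mm (t : R) := Rmax (t-1) 0.
Definition u (t : R) := mm t ^ 4.
Definition u1 (t : R) := 4 * mm t ^ 3.
Definition u2 (t : R) := 12 * mm t ^ 2.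

Lemma u_d t : is_derive u t (u1 t).
Proof.
  unfold u, u1, mm. replace (4 * Rmax (t-1) 0 ^ 3) with (INR 4 * Rmax (t - 1) 0 ^ 3) by (simpl; ring).
  apply (mpow_deriv 3 t). lia.
Qed.

Lemma u1_d t : is_derive u1 t (u2 t).
Proof.
  unfold u1, u2, mm. replace (12 * Rmax (t - 1) 0 ^ 2) with (4 * (INR 3 * Rmax (t - 1) 0 ^ 2)) by (simpl; ring).
  apply is_derive_scal. apply (mpow_deriv 2 t). lia.
Qed.

Definition W t := exp 1 + u t.
Definition Lw t := ln (W t).
Definition Psi t := ln (Lw t).
Definition Psi1 t := u1 t / (W t * Lw t).
Definition Psi2 t := u2 t / (W t * Lw t) - (u1 t)^2 * (Lw t + 1) / (W t * Lw t)^2.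

Lemma mm_ge0 t : 0 <= mm t.
Proof. unfold mm. apply Rmax_r. Qed.
Lemma u_ge0 t : 0 <= u t.
Proof. unfold u. apply pow_le, mm_ge0. Qed.
Lemma W_ge t : exp 1 <= W t.
Proof. unfold W. pose proof (u_ge0 t). lra. Qed.
Lemma e_gt2 : 2 < exp 1.
Proof. pose proof (exp_ineq1 1). lra. Qed.
Lemma W_pos t : 0 < W t.
Proof. pose proof (W_ge t). pose proof e_gt2. lra. Qed.
Lemma Lw_ge1 t : 1 <= Lw t.
Proof. unfold Lw. rewrite <- (ln_exp 1) at 1. apply ln_le.
  apply exp_pos. apply W_ge. Qed.

Lemma W_d t : is_derive W t (u1 t).
Proof. unfold W. auto_derive. apply (ex_intro _ _ (u_d t)).
  rewrite (is_derive_unique (fun x : R => u x) _ _ (u_d t)). ring. Qed.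

Lemma Lw_d t : is_derive Lw t (u1 t / W t).
Proof. unfold Lw. auto_derive. split. apply (ex_intro _ _ (W_d t)). split; auto. apply W_pos.
  rewrite (is_derive_unique (fun x : R => W x) _ _ (W_d t)). field. apply Rgt_not_eq, W_pos. Qed.

Lemma Psi_d t : is_derive Psi t (Psi1 t).
Proof. unfold Psi, Psi1. auto_derive. split. apply (ex_intro _ _ (Lw_d t)). split; auto.
  pose proof (Lw_ge1 t); lra.
  rewrite (is_derive_unique (fun x : R => Lw x) _ _ (Lw_d t)). field. pose proof (Lw_ge1 t). pose proof (W_pos t). split; lra. Qed.

Lemma Psi1_d t : is_derive Psi1 t (Psi2 t).
Proof. unfold Psi1, Psi2.
  pose proof (Lw_ge1 t). pose proof (W_pos t).
  auto_derive. repeat split. apply (ex_intro _ _ (u1_d t)). apply (ex_intro _ _ (W_d t)). apply (ex_intro _ _ (Lw_d t)).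
  apply Rgt_not_eq. apply Rmult_lt_0_compat; lra.
  rewrite (is_derive_unique (fun x : R => u1 x) _ _ (u1_d t)). rewrite (is_derive_unique (fun x : R => W x) _ _ (W_d t)). rewrite (is_derive_unique (fun x : R => Lw x) _ _ (Lw_d t)).
  field. split; lra. Qed.


Definition P (a b eps t : R) := a - b * cos (eps * Psi t).
Definition P1 (a b eps t : R) := b * sin (eps * Psi t) * (eps * Psi1 t).
Definition P2 (a b eps t : R) :=
  b * (cos (eps * Psi t) * (eps * Psi1 t)^2 + sin (eps * Psi t) * (eps * Psi2 t)).
Definition G (a b eps t : R) := exp (P a b eps t * ln t).
Definition Q1 (a b eps t : R) := P1 a b eps t * ln t + P a b eps t / t.
Definition G1 (a b eps t : R) := G a b eps t * Q1 a b eps t.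
Definition G2 (a b eps t : R) := G a b eps t *
  (Q1 a b eps t ^ 2 + P2 a b eps t * ln t + 2 * P1 a b eps t / t - P a b eps t / t^2).

Lemma P_d a b eps t : is_derive (P a b eps) t (P1 a b eps t).
Proof. unfold P, P1. auto_derive. apply (ex_intro _ _ (Psi_d t)).
  rewrite (is_derive_unique (fun x : R => Psi x) _ _ (Psi_d t)). ring. Qed.

Lemma P1_d a b eps t : is_derive (P1 a b eps) t (P2 a b eps t).
Proof. unfold P1, P2. auto_derive. split. apply (ex_intro _ _ (Psi_d t)). split; auto. apply (ex_intro _ _ (Psi1_d t)).
  rewrite (is_derive_unique (fun x : R => Psi x) _ _ (Psi_d t)).
  rewrite (is_derive_unique (fun x : R => Psi1 x) _ _ (Psi1_d t)). ring. Qed.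

Lemma G_d a b eps t : 0 < t -> is_derive (G a b eps) t (G1 a b eps t).
Proof. intro Ht. unfold G1, G, Q1. auto_derive. split. apply (ex_intro _ _ (P_d a b eps t)). split; auto.
  rewrite (is_derive_unique (fun x : R => P a b eps x) _ _ (P_d a b eps t)). field. lra. Qed.

Lemma Q1_d a b eps t : 0 < t -> is_derive (Q1 a b eps) t
  (P2 a b eps t * ln t + 2 * P1 a b eps t / t - P a b eps t / t^2).
Proof. intro Ht. unfold Q1. auto_derive. repeat split; auto.
  apply (ex_intro _ _ (P1_d a b eps t)). apply (ex_intro _ _ (P_d a b eps t)). lra.
  rewrite (is_derive_unique (fun x : R => P a b eps x) _ _ (P_d a b eps t)).
  rewrite (is_derive_unique (fun x : R => P1 a b eps x) _ _ (P1_d a b eps t)). field. lra. Qed.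

Lemma G1_d a b eps t : 0 < t -> is_derive (G1 a b eps) t (G2 a b eps t).
Proof. intro Ht. unfold G1, G2. auto_derive. split. apply (ex_intro _ _ (G_d a b eps t Ht)). split; auto.
  apply (ex_intro _ _ (Q1_d a b eps t Ht)).
  rewrite (is_derive_unique (fun x : R => G a b eps x) _ _ (G_d a b eps t Ht)).
  rewrite (is_derive_unique (fun x : R => Q1 a b eps x) _ _ (Q1_d a b eps t Ht)). unfold G1. ring. Qed.

Lemma sinphi eps t : sin (phi eps t) = - cos (eps * Psi t).
Proof.
  unfold phi, Psi, Lw, W, u, mm.
  destruct (Rle_dec t 1) as [H|H].
  - rewrite Rmax_right by lra. replace (0^4) with 0 by ring. rewrite Rplus_0_r, ln_exp, ln_1.
    rewrite Rmult_0_r, cos_0. replace (3/2*PI) with (3*(PI/2)) by field. rewrite sin_3PI2. ring.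
  - rewrite Rmax_left by lra. rewrite sin_plus. replace (3/2*PI) with (3*(PI/2)) by field.
    rewrite sin_3PI2, cos_3PI2. ring.
Qed.

Lemma g_eq a b eps t : 0 < t -> g a b eps t = G a b eps t.
Proof. intro Ht. unfold g, G, P, Rpower. destruct (Rlt_dec 0 t); [|lra].
  rewrite sinphi. f_equal. ring. Qed.

Lemma Dg a b eps t : 0 < t -> Derive (g a b eps) t = G1 a b eps t /\ is_derive (g a b eps) t (G1 a b eps t).
Proof. intro Ht.
  assert (H : is_derive (g a b eps) t (G1 a b eps t)).
  { apply is_derive_ext_loc with (G a b eps).
    apply locally_interval with (Finite 0) p_infty; simpl; auto.
    intros y Hy _. symmetry. apply g_eq; auto. apply G_d; auto. }
  split; auto. apply is_derive_unique; auto. Qed.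

Lemma DDg a b eps t : 0 < t -> is_derive (Derive (g a b eps)) t (G2 a b eps t).
Proof. intro Ht.
  apply is_derive_ext_loc with (G1 a b eps).
  apply locally_interval with (Finite 0) p_infty; simpl; auto.
  intros y Hy _. symmetry. apply Dg; auto. apply G1_d; auto. Qed.
Lemma lt_div_mul e n d : 0 < d -> e < n / d -> d * e < n.
Proof. intros. assert (n = (n/d)*d) by (field; lra). nra. Qed.

Lemma Rabs_le_b x c : Rabs x <= c -> - c <= x <= c.
Proof. unfold Rabs; destruct (Rcase_abs x); lra. Qed.

Lemma core (a b eps p x y z : R)
  (hb : 0 < b) (hab1 : 1 < a - b) (hab2 : a + b < 2)
  (he0 : 0 < eps) (he1 : eps < 1)
  (he2 : eps < (a - 1 - b) / (224 * b))
  (he3 : eps < (2 - a - b) / (224 * b))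
  (hp : a - b <= p <= a + b) (hx : Rabs x <= 8 * (b*eps)) (hy : Rabs y <= 8*(b*eps))
  (hz : Rabs z <= 164 * (b*eps)) :
  0 < x + p /\ 224 * b * eps + a - 2 + b < 0 /\
  (x+p)^2 + z + 2*y - p - (x+p) <= (224 * b * eps + a - 2 + b) * (x + p).
Proof.
  set (k := b * eps). change (b*eps) with k in hx, hy, hz.
  assert (Hk0 : 0 < k) by (unfold k; nra).
  assert (Hk1 : 224 * k < a - 1 - b).
  { unfold k. apply lt_div_mul in he2; lra. }
  assert (Hk2 : 224 * k < 2 - a - b).
  { unfold k. apply lt_div_mul in he3; lra. }
  replace (224 * b * eps) with (224 * k) by (unfold k; ring).
  apply Rabs_le_b in hx. apply Rabs_le_b in hy. apply Rabs_le_b in hz. destruct hx as [hx1 hx2], hy as [hy1 hy2], hz as [hz1 hz2], hp as [hp1 hp2].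
  set (K := 224 * k + a - 2 + b).
  assert (HK1 : 0 < 2*p - 1 - K) by (unfold K; lra). assert (HK2 : 2*p - 1 - K < 3) by (unfold K; lra).
  assert (Hx1 : x * (2*p-1-K) <= 24 * k).
  { assert (0 <= (8*k - x) * (2*p-1-K)) by (apply Rmult_le_pos; [ lra | lra]).
    assert (8*k*(2*p-1-K) <= 8*k*3) by (apply Rmult_le_compat_l; lra). lra. }
  assert (Hx2 : x^2 <= k).
  { assert (0 <= (8*k - x) * (8*k + x)) by (apply Rmult_le_pos; lra).
    assert (k * (64 * k) <= k * 1) by (apply Rmult_le_compat_l; lra). simpl. lra. }
  assert (Hp1 : p * (p - 2 - K) <= - 224 * k * p) by (unfold K; nra).
  split; [lra|]. split; [unfold K; lra|].
  assert ((x+p)^2 + z + 2*y - p - (x+p) - K*(x+p) = p*(p-2-K) + x*(2*p-1-K) + x^2 + z + 2*y) by ring.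
  nra.
Qed.
Lemma F1 s : 0 < s -> (1+s)*s^3 <= 2*(2+s^4). Proof. intros. nra. Qed.
Lemma F2 s : 0 < s -> (1+s)^2*s^2 <= 3*(2+s^4). Proof. intros. nra. Qed.
Lemma F4 s : 0 < s -> 1+s <= 2+s^4. Proof. intros.
  assert (0 <= (s^2-1/2)^2) by apply pow2_ge_0. assert (0 <= (s-1/2)^2) by apply pow2_ge_0. nra. Qed.
Lemma F3 s : 0 < s -> (1+s)^2*s^6 <= 2*(2+s^4)^2. Proof. intros.
  assert (0 <= (s^2-s-3/2)^2) by apply pow2_ge_0. assert (0 <= (s-3/2)^2) by apply pow2_ge_0.
  assert (0 <= s^4) by (apply pow_le; lra).
  assert (0 <= s^4 * ((s^2-s-3/2)^2 + (s-3/2)^2 + 7/2)) by (apply Rmult_le_pos; lra).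
  nra. Qed.

Lemma div_le X D c : 0 < D -> X <= c * D -> X / D <= c.
Proof. intros. assert (X / D = X * / D) by reflexivity.
  assert (0 < / D) by (apply Rinv_0_lt_compat; lra).
  assert (X * / D <= c * D * / D) by (apply Rmult_le_compat_r; lra).
  replace (c * D * / D) with c in * by (field; lra). lra. Qed.
Lemma div_ge0 X D : 0 < D -> 0 <= X -> 0 <= X / D.
Proof. intros. unfold Rdiv. apply Rmult_le_pos; auto. left. apply Rinv_0_lt_compat; lra. Qed.

Lemma bnds s W L lt : 0 < s -> 2 + s^4 <= W -> 1 <= L -> 0 < lt <= L ->
  0 <= (1+s) * (4*s^3/(W*L)) <= 8 /\ 0 <= (1+s) * lt * (4*s^3/(W*L)) <= 8 /\
  Rabs ((1+s)^2 * lt * (12*s^2/(W*L) - (4*s^3)^2*(L+1)/(W*L)^2)) <= 100.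
Proof.
  intros Hs HW HL [Hlt1 Hlt2].
  assert (Hs3 : 0 < s^3) by (apply pow_lt; lra).
  assert (Hs2 : 0 < s^2) by (apply pow_lt; lra).
  assert (Hs4 : 0 < s^4) by (apply pow_lt; lra).
  assert (HW0 : 0 < W) by lra.
  assert (HD : 0 < W * L) by nra.
  assert (HWL : W <= W * L) by nra.
  pose proof (F1 s Hs) as HF1. pose proof (F2 s Hs) as HF2. pose proof (F3 s Hs) as HF3.
  split; [|split].
  - replace ((1+s) * (4*s^3/(W*L))) with ((1+s)*(4*s^3)/(W*L)) by (field; lra).
    split. apply div_ge0; nra.
    apply div_le; nra.
  - replace ((1+s) * lt * (4*s^3/(W*L))) with ((1+s)*lt*(4*s^3)/(W*L)) by (field; lra). split. apply div_ge0; nra.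
    apply div_le; auto.
    assert ((1+s)*lt*(4*s^3) <= (1+s)*L*(4*s^3)) by (apply Rmult_le_compat_r; nra).
    assert ((1+s)*L*(4*s^3) = 4*L*((1+s)*s^3)) by ring.
    assert (4*L*((1+s)*s^3) <= 4*L*(2*W)) by (apply Rmult_le_compat_l; nra).
    nra.
  - set (T1 := (1+s)^2 * lt * (12*s^2/(W*L))).
    set (T2 := (1+s)^2 * lt * ((4*s^3)^2*(L+1)/(W*L)^2)).
    replace ((1+s)^2 * lt * (12*s^2/(W*L) - (4*s^3)^2*(L+1)/(W*L)^2)) with (T1 - T2)
      by (unfold T1, T2; ring).
    assert (H1 : 0 <= T1 <= 36).
    { unfold T1. replace ((1+s)^2 * lt * (12*s^2/(W*L))) with ((1+s)^2 * lt * (12*s^2)/(W*L)) by (field; lra). split. apply div_ge0; auto.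
      apply Rmult_le_pos; [|lra]. apply Rmult_le_pos; nra.
      apply div_le; auto.
      assert (0 <= (1+s)^2) by apply pow2_ge_0.
      assert ((1+s)^2*lt*(12*s^2) <= (1+s)^2*L*(12*s^2)) by (apply Rmult_le_compat_r; nra).
      assert ((1+s)^2*L*(12*s^2) = 12*L*((1+s)^2*s^2)) by ring.
      assert (12*L*((1+s)^2*s^2) <= 12*L*(3*W)) by (apply Rmult_le_compat_l; nra).
      nra. }
    assert (H2 : 0 <= T2 <= 64).
    { unfold T2. assert (HD2 : 0 < (W*L)^2) by (apply pow_lt; auto).
      replace ((1+s)^2 * lt * ((4*s^3)^2*(L+1)/(W*L)^2)) with ((1+s)^2 * lt * ((4*s^3)^2*(L+1))/(W*L)^2) by (field; lra). split. apply div_ge0; auto.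
      apply Rmult_le_pos; [apply Rmult_le_pos; [apply pow2_ge_0|lra]|].
      apply Rmult_le_pos; [apply pow2_ge_0|lra].
      apply div_le; auto.
      assert (0 <= (1+s)^2*s^6) by (apply Rmult_le_pos; [apply pow2_ge_0| apply pow_le; lra]).
      assert (lt*(L+1) <= 2*L^2) by nra.
      replace ((1 + s) ^ 2 * lt * ((4 * s ^ 3) ^ 2 * (L + 1))) with (16*((1+s)^2*s^6)*(lt*(L+1))) by ring.
      assert (16*((1+s)^2*s^6)*(lt*(L+1)) <= 16*((1+s)^2*s^6)*(2*L^2)) by (apply Rmult_le_compat_l; nra).
      assert ((2+s^4)^2 <= W^2) by (apply pow_incr; nra).
      assert (0 <= L^2) by apply pow2_ge_0.
      assert (((1+s)^2*s^6) * L^2 <= (2*W^2) * L^2) by (apply Rmult_le_compat_r; nra).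
      replace ((W*L)^2) with (W^2*L^2) by ring. nra. }
    apply Rabs_le. lra.
Qed.

Lemma abs_cA c A M : Rabs c <= 1 -> Rabs A <= M -> Rabs (c * A) <= M.
Proof. intros. rewrite Rabs_mult. pose proof (Rabs_pos c). pose proof (Rabs_pos A).
  assert (Rabs c * Rabs A <= 1 * Rabs A) by (apply Rmult_le_compat_r; lra). lra. Qed.

Lemma abs_01 c : -1 <= c <= 1 -> Rabs c <= 1.
Proof. intros. apply Rabs_le. lra. Qed.

Lemma glue a b eps t : 0 < b -> 0 < eps -> eps < 1 -> 0 < t ->
  a - b <= P a b eps t <= a + b /\
  Rabs (t * ln t * P1 a b eps t) <= 8 * (b * eps) /\
  Rabs (t * P1 a b eps t) <= 8 * (b * eps) /\
  Rabs (t^2 * ln t * P2 a b eps t) <= 164 * (b * eps).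
Proof.
  intros Hb He0 He1 Ht.
  assert (Hk : 0 < b * eps) by nra.
  split.
  { unfold P. pose proof (COS_bound (eps * Psi t)). nra. }
  pose proof (SIN_bound (eps * Psi t)) as Hsn. pose proof (COS_bound (eps * Psi t)) as Hcs.
  apply abs_01 in Hsn. apply abs_01 in Hcs.
  destruct (Rle_dec t 1) as [H1|H1].
  - assert (Hm : mm t = 0) by (unfold mm; apply Rmax_right; lra).
    assert (HP1 : Psi1 t = 0) by (unfold Psi1, u1; rewrite Hm; unfold Rdiv; ring).
    assert (HP2 : Psi2 t = 0) by (unfold Psi2, u1, u2; rewrite Hm; unfold Rdiv; ring).
    unfold P1, P2. rewrite HP1, HP2.
    repeat split; match goal with |- Rabs ?e <= _ => replace e with 0 by ring end; rewrite Rabs_R0; lra.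
  - set (s := t - 1).
    assert (Hs : 0 < s) by (unfold s; lra).
    assert (Hm : mm t = s) by (unfold mm, s; apply Rmax_left; lra).
    assert (HW : 2 + s^4 <= W t) by (unfold W, u; rewrite Hm; pose proof e_gt2; lra).
    pose proof (Lw_ge1 t) as HL.
    assert (Hlt : 0 < ln t <= Lw t).
    { split. rewrite <- ln_1. apply ln_increasing; lra.
      unfold Lw. apply ln_le; auto. pose proof (F4 s Hs). unfold s in *. lra. }
    destruct (bnds s (W t) (Lw t) (ln t) Hs HW HL Hlt) as [HB [HA HE]].
    replace (1 + s) with t in HB, HA, HE by (unfold s; ring).
    assert (EP1 : Psi1 t = 4 * s^3 / (W t * Lw t)) by (unfold Psi1, u1; rewrite Hm; reflexivity).
    assert (EP2 : Psi2 t = 12 * s^2 / (W t * Lw t) - (4*s^3)^2 * (Lw t + 1) / (W t * Lw t)^2)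
      by (unfold Psi2, u1, u2; rewrite Hm; reflexivity).
    unfold P1, P2. rewrite <- EP1 in HB, HA. rewrite <- EP2 in HE.
    split; [|split].
    + replace (t * ln t * (b * sin (eps * Psi t) * (eps * Psi1 t))) with
        ((b*eps) * (sin (eps * Psi t) * (t * ln t * Psi1 t))) by ring.
      rewrite Rabs_mult, (Rabs_pos_eq (b*eps)) by lra.
      rewrite (Rmult_comm _ (b*eps)).
      apply Rmult_le_compat_l; [lra|]. apply abs_cA; auto. apply Rabs_le; lra.
    + replace (t * (b * sin (eps * Psi t) * (eps * Psi1 t))) with
        ((b*eps) * (sin (eps * Psi t) * (t * Psi1 t))) by ring.
      rewrite Rabs_mult, (Rabs_pos_eq (b*eps)) by lra.
      rewrite (Rmult_comm _ (b*eps)).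
      apply Rmult_le_compat_l; [lra|]. apply abs_cA; auto. apply Rabs_le; lra.
    + replace (t ^ 2 * ln t * (b * (cos (eps * Psi t) * (eps * Psi1 t) ^ 2 + sin (eps * Psi t) * (eps * Psi2 t))))
        with ((b*eps) * (eps * (cos (eps * Psi t) * ((t * ln t * Psi1 t) * (t * Psi1 t))) + sin (eps * Psi t) * (t^2 * ln t * Psi2 t))) by ring.
      rewrite Rabs_mult, (Rabs_pos_eq (b*eps)) by lra.
      rewrite (Rmult_comm _ (b*eps)).
      apply Rmult_le_compat_l; [lra|].
      eapply Rle_trans; [apply Rabs_triang|].
      assert (Rabs (cos (eps * Psi t) * ((t * ln t * Psi1 t) * (t * Psi1 t))) <= 64).
      { apply abs_cA; auto. apply Rabs_le. split; nra. }
      assert (Rabs (sin (eps * Psi t) * (t^2 * ln t * Psi2 t)) <= 100) by (apply abs_cA; auto).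
      rewrite Rabs_mult, (Rabs_pos_eq eps) by lra.
      assert (eps * Rabs (cos (eps * Psi t) * ((t * ln t * Psi1 t) * (t * Psi1 t))) <= eps * 64)
        by (apply Rmult_le_compat_l; lra).
      lra.
Qed.

Lemma fin gv t p x y z K : 0 < gv -> 0 < t -> 0 < x + p -> K < 0 ->
  (x+p)^2 + z + 2*y - p - (x+p) <= K * (x+p) ->
  0 < gv*(x+p)/t /\
  gv*((x+p)^2+z+2*y-p)/t^2 - gv*(x+p)/t/t <= K * (gv*(x+p)/t/t) /\
  K * (gv*(x+p)/t/t) < 0 /\
  gv*((x+p)^2+z+2*y-p)/t^2 * t / (gv*(x+p)/t) <= 1.
Proof.
  intros Hg Ht Hxp HK H.
  assert (Hc : 0 < gv / t^2) by (apply Rdiv_lt_0_compat; [lra| apply pow_lt; lra]).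
  assert (E1 : gv*((x+p)^2+z+2*y-p)/t^2 - gv*(x+p)/t/t = gv/t^2 * ((x+p)^2+z+2*y-p - (x+p))) by (field; lra).
  assert (E2 : K * (gv*(x+p)/t/t) = gv/t^2 * (K*(x+p))) by (field; lra).
  assert (I1 : gv/t^2 * ((x+p)^2+z+2*y-p - (x+p)) <= gv/t^2 * (K*(x+p))) by (apply Rmult_le_compat_l; lra).
  assert (I2 : gv/t^2 * (K*(x+p)) < 0).
  { assert (K * (x+p) < 0) by nra. nra. }
  assert (P0 : 0 < gv*(x+p)/t) by (apply Rdiv_lt_0_compat; nra).
  split; [auto|]. split; [lra|]. split; [lra|].
  assert (E3 : gv*((x+p)^2+z+2*y-p)/t^2 * t / (gv*(x+p)/t) =
     (gv*((x+p)^2+z+2*y-p)/t^2 - gv*(x+p)/t/t) * t / (gv*(x+p)/t) + 1) by (field; nra).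
  rewrite E3.
  assert ((gv*((x+p)^2+z+2*y-p)/t^2 - gv*(x+p)/t/t) * t / (gv*(x+p)/t) <= 0).
  { set (X := gv*((x+p)^2+z+2*y-p)/t^2 - gv*(x+p)/t/t). set (Y := gv*(x+p)/t).
    assert (HX : X < 0) by (unfold X; lra).
    assert (X * t < 0) by nra.
    assert (0 <= -(X*t)/Y) by (apply div_ge0; [unfold Y; auto|lra]).
    replace (-(X*t)/Y) with (-(X*t/Y)) in * by (field; unfold Y; lra). lra. }
  lra.
Qed.

Lemma pt (a b eps : R)
  (ha : 0 < a) (hb : 0 < b) (hab1 : 1 < a - b) (hab2 : a + b < 2)
  (he0 : 0 < eps) (he1 : eps < 1)
  (he2 : eps < (a - 1 - b) / (224 * b))
  (he3 : eps < (2 - a - b) / (224 * b)) t (Ht : 0 < t) :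
  0 < G1 a b eps t /\
  G2 a b eps t - G1 a b eps t / t <= (224 * b * eps + a - 2 + b) * (G1 a b eps t / t) /\
  (224 * b * eps + a - 2 + b) * (G1 a b eps t / t) < 0 /\
  G2 a b eps t * t / G1 a b eps t <= 1.
Proof.
  destruct (glue a b eps t hb he0 he1 Ht) as [Hp [Hx [Hy Hz]]].
  destruct (core a b eps _ _ _ _ hb hab1 hab2 he0 he1 he2 he3 Hp Hx Hy Hz) as [Hxp [HK Hin]].
  assert (Hg : 0 < G a b eps t) by (unfold G; apply exp_pos).
  pose proof (fin _ _ _ _ _ _ _ Hg Ht Hxp HK Hin) as HF.
  replace (G1 a b eps t) with (G a b eps t * (t * ln t * P1 a b eps t + P a b eps t) / t)
    by (unfold G1, Q1; field; lra).
  replace (G2 a b eps t) with (G a b eps t * ((t * ln t * P1 a b eps t + P a b eps t)^2 +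
     t^2 * ln t * P2 a b eps t + 2 * (t * P1 a b eps t) - P a b eps t) / t^2)
    by (unfold G2, Q1; field; lra).
  exact HF.
Qed.

Theorem theorem5p1 (a b eps : R)
  (ha : 0 < a) (hb : 0 < b) (hab1 : 1 < a - b) (hab2 : a + b < 2)
  (he0 : 0 < eps) (he1 : eps < 1)
  (he2 : eps < (a - 1 - b) / (224 * b))
  (he3 : eps < (2 - a - b) / (224 * b)) :
  (forall t, 0 < t ->
     ex_derive (g a b eps) t /\ ex_derive (Derive (g a b eps)) t /\
     0 < Derive (g a b eps) t /\
     Derive (Derive (g a b eps)) t - Derive (g a b eps) t / t
       <= (224 * b * eps + a - 2 + b) * (Derive (g a b eps) t / t) /\
     (224 * b * eps + a - 2 + b) * (Derive (g a b eps) t / t) < 0 /\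
     Derive (Derive (g a b eps)) t * t / Derive (g a b eps) t <= 1) /\
  (forall s t, 0 < s -> s < t ->
     Derive (g a b eps) t / t < Derive (g a b eps) s / s).
Proof.
  split.
  - intros t Ht.
    destruct (Dg a b eps t Ht) as [E1 D1].
    pose proof (DDg a b eps t Ht) as D2.
    rewrite (is_derive_unique _ _ _ D2), E1.
    split; [exists (G1 a b eps t); auto|]. split; [exists (G2 a b eps t); auto|].
    apply pt; auto.
  - intros s t Hs Hst.
    set (f := fun x => - (Derive (g a b eps) x / x)).
    assert (Hd : forall x : R, Rbar_lt 0 x -> Rbar_lt x p_infty ->
      is_derive f x (- (G2 a b eps x / x - G1 a b eps x / x^2))).
    { intros x Hx _. simpl in Hx.
      apply is_derive_ext_loc with (fun y => - (G1 a b eps y / y)).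
      apply locally_interval with (Finite 0) p_infty; [simpl; lra|simpl; exact I|].
      intros y Hy _. unfold f. destruct (Dg a b eps y Hy) as [E _]. rewrite E. reflexivity.
      auto_derive. split. apply (ex_intro _ _ (G1_d a b eps x Hx)). split; auto. lra.
      rewrite (is_derive_unique (fun x : R => G1 a b eps x) _ _ (G1_d a b eps x Hx)). field. lra. }
    assert (Hpos : forall x : R, Rbar_lt 0 x -> Rbar_lt x p_infty ->
      - (G2 a b eps x / x - G1 a b eps x / x^2) > 0).
    { intros x Hx _. simpl in Hx.
      destruct (pt a b eps ha hb hab1 hab2 he0 he1 he2 he3 x Hx) as [_ [H1 [H2 _]]].
      assert (G2 a b eps x / x - G1 a b eps x / x^2 = (G2 a b eps x - G1 a b eps x / x) / x) by (field; lra).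
      assert ((G2 a b eps x - G1 a b eps x / x) < 0) by lra.
      assert ((G2 a b eps x - G1 a b eps x / x) / x < 0).
      { set (X := G2 a b eps x - G1 a b eps x / x).
        assert (0 < -X / x) by (apply Rdiv_lt_0_compat; unfold X; lra).
        replace (-X/x) with (-(X/x)) in * by (field; lra). lra. }
      lra. }
    pose proof (incr_function f (Finite 0) p_infty _ Hd Hpos s t Hs Hst I) as Hinc.
    unfold f in Hinc. lra.
Qed.
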